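(* Consider $k\ge 2$ arms. For each arm $j$, $n_j\ge 1$ samples with values in $[0,1]$ have been observed, with sample mean $\overline X_j^{n_j}\in[0,1]$. Let $\alpha$ be an arm with the largest sample mean and $\beta$ an arm with the second largest sample mean, i.e. $\overline X_\alpha^{n_\alpha}\ge \overline X_\beta^{n_\beta}\ge \overline X_j^{n_j}$ for all $j\ne\alpha$. Fix an integer $N\ge 1$ and an arm $i$, and let $Y_1,\dots,Y_N$ be random variables with values in $[0,1]$ (the next $N$ samples of arm $i$). Define the updated sample mean of arm $i$ as $$\overline X_i^{n_i+N}=\frac{n_i\overline X_i^{n_i}+\sum_{t=1}^N Y_t}{n_i+N},$$ while the sample means of all other arms are unchanged. Let $\Lambda_i^b$ be the blinkered intrinsic value of information of testing arm $i$ $N$ times (defined in the context). Then $$\Lambda_\alpha^b\le \frac{N\,\overline X_\beta^{n_\beta}}{n_\alpha}\,\Pr\!\left(\overline X_\alpha^{n_\alpha+N}\le \overline X_\beta^{n_\beta}\right),$$ and for every $i\ne\alpha$, $$\Lambda_i^b\le \frac{N\,(1-\overline X_\alpha^{n_\alpha})}{n_i}\,\Pr\!\left(\overline X_i^{n_i+N}\ge \overline X_\alpha^{n_\alpha}\right).$$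
   Context: Setting: a selection problem among arms, where samples of each arm take values in $[0,1]$ and the estimated value of an arm is its sample mean; after sampling stops, the arm with the greatest sample mean is selected. Currently the selected arm is $\alpha$. For a test consisting of $N$ additional samples of arm $i$, let $m_j'$ denote the sample mean of arm $j$ after the test (so $m_i'=\overline X_i^{n_i+N}$ and $m_j'=\overline X_j^{n_j}$ for $j\ne i$). The blinkered intrinsic value of information is the expected improvement, measured by the updated estimates, of the best arm after the test over the currently selected arm $\alpha$: $$\Lambda_i^b=\mathbb E\!\left[\max_j m_j' - m_\alpha'\right].$$ In particular $\Lambda_\alpha^b=\mathbb E[(\overline X_\beta^{n_\beta}-\overline X_\alpha^{n_\alpha+N})^+]$ and, for $i\ne\alpha$, $\Lambda_i^b=\mathbb E[(\overline X_i^{n_i+N}-\overline X_\alpha^{n_\alpha})^+]$. Probabilities and expectations are over the random future samples $Y_1,\dots,Y_N$. *)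

(* Defs.v *)
(* A general probability space is encoded
   from scratch (sigma-algebra + countably additive probability), and the
   expectation of a bounded function is the supremum of the integrals of
   simple functions lying below it (= Lebesgue integral for bounded
   measurable functions). *)
From Stdlib Require Import Reals Lra List Classical ClassicalEpsilon.
Open Scope R_scope.

Record prob_space (Omega : Type) := {
  measurable : (Omega -> Prop) -> Prop;
  Prob : (Omega -> Prop) -> R;
  meas_full : measurable (fun _ => True);
  meas_compl : forall A, measurable A -> measurable (fun w => ~ A w);
  meas_countable_union : forall A : nat -> Omega -> Prop,
      (forall n, measurable (A n)) -> measurable (fun w => exists n, A n w);
  Prob_nonneg : forall A, measurable A -> 0 <= Prob A;
  Prob_full : Prob (fun _ => True) = 1;
  Prob_sigma_additive : forall A : nat -> Omega -> Prop,
      (forall n, measurable (A n)) ->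
      (forall i j w, i <> j -> A i w -> A j w -> False) ->
      infinite_sum (fun n => Prob (A n)) (Prob (fun w => exists n, A n w))
}.
Arguments measurable {Omega}.
Arguments Prob {Omega}.

Definition indic {Omega : Type} (A : Omega -> Prop) (w : Omega) : R :=
  if excluded_middle_informative (A w) then 1 else 0.

Definition simple_eval {Omega : Type} (s : list (R * (Omega -> Prop))) (w : Omega) : R :=
  fold_right Rplus 0 (map (fun p => fst p * indic (snd p) w) s).

Definition simple_integral {Omega : Type} (P : prob_space Omega)
  (s : list (R * (Omega -> Prop))) : R :=
  fold_right Rplus 0 (map (fun p => fst p * Prob P (snd p)) s).

Definition lower_integrals {Omega : Type} (P : prob_space Omega) (f : Omega -> R) (x : R) : Prop :=
  exists s : list (R * (Omega -> Prop)),
    Forall (fun p => measurable P (snd p)) s /\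
    (forall w, simple_eval s w <= f w) /\
    x = simple_integral P s.

Definition Expect {Omega : Type} (P : prob_space Omega) (f : Omega -> R) : R :=
  match excluded_middle_informative
          (bound (lower_integrals P f) /\ exists x, lower_integrals P f x) with
  | left H => proj1_sig (completeness _ (proj1 H) (proj2 H))
  | right _ => 0
  end.

Definition Pr {Omega : Type} (P : prob_space Omega) (A : Omega -> Prop) : R :=
  Expect P (indic A).

Definition measurable_fun {Omega : Type} (P : prob_space Omega) (X : Omega -> R) : Prop :=
  forall a : R, measurable P (fun w => X w <= a).

(* updated sample mean of arm i after N further samples Y 0 .. Y (N-1) *)
Definition updated_mean {Omega : Type} (ni N : nat) (xi : R) (Y : nat -> Omega -> R)
  (w : Omega) : R :=
  (INR ni * xi + fold_right Rplus 0 (map (fun t => Y t w) (seq 0 N))) / INR (ni + N).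

Definition post_mean {Omega : Type} (n : nat -> nat) (xbar : nat -> R)
  (i N : nat) (Y : nat -> Omega -> R) (j : nat) (w : Omega) : R :=
  if Nat.eq_dec j i then updated_mean (n i) N (xbar i) Y w else xbar j.

(* blinkered intrinsic value of information of testing arm i N times,
   arms indexed 0..k-1, alpha the currently selected arm:
   Lambda_i^b = E[ max_j m'_j - m'_alpha ] *)
Definition blinkered_VOI {Omega : Type} (P : prob_space Omega) (k : nat)
  (n : nat -> nat) (xbar : nat -> R) (alpha i N : nat) (Y : nat -> Omega -> R) : R :=
  Expect P (fun w =>
    fold_right Rmax (post_mean n xbar i N Y alpha w)
      (map (fun j => post_mean n xbar i N Y j w) (seq 0 k))
    - post_mean n xbar i N Y alpha w).

(* Main.v *)
Require Import Defs.
From Stdlib Require Import Reals List.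
From Stdlib Require Import Lra Psatz Classical FunctionalExtensionality PropExtensionality ClassicalEpsilon.
Open Scope R_scope.

Lemma ext_pred {O : Type} (A B : O -> Prop) : (forall w, A w <-> B w) -> A = B.
Proof. intro H. apply functional_extensionality; intro w. apply propositional_extensionality; auto. Qed.

Section S.
Variable Omega : Type.
Variable P : prob_space Omega.

Lemma meas_empty : measurable P (fun _ => False).
Proof.
  replace (fun _ : Omega => False) with (fun w : Omega => ~ True).
  apply meas_compl, meas_full. apply ext_pred; tauto.
Qed.

Lemma meas_union (A B : Omega -> Prop) : measurable P A -> measurable P B ->
  measurable P (fun w => A w \/ B w).
Proof.
  intros HA HB.
  replace (fun w => A w \/ B w) with
    (fun w => exists n, (match n with 0%nat => A | _ => B end) w).
  apply meas_countable_union. intros [|n]; auto.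
  apply ext_pred; intro w; split.
  - intros [[|n] H]; auto.
  - intros [H|H]; [exists 0%nat | exists 1%nat]; auto.
Qed.

Lemma meas_inter (A B : Omega -> Prop) : measurable P A -> measurable P B ->
  measurable P (fun w => A w /\ B w).
Proof.
  intros HA HB.
  replace (fun w => A w /\ B w) with (fun w => ~ ((fun w => ~ A w) w \/ (fun w => ~ B w) w)).
  apply meas_compl, meas_union; apply meas_compl; auto.
  apply ext_pred; intro w; simpl; tauto.
Qed.

Lemma Prob_empty : Prob P (fun _ => False) = 0.
Proof.
  pose proof (Prob_sigma_additive _ P (fun _ => fun _ => False)) as H.
  cbv beta in H.
  assert (E : (fun w : Omega => exists n : nat, False) = (fun _ => False)).
  { apply ext_pred; intro; split; [intros [_ []] | tauto]. }
  rewrite E in H. clear E.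
  specialize (H (fun _ => meas_empty) (fun _ _ _ _ f _ => f)).
  set (p := Prob P (fun _ => False)) in *.
  assert (Hp : 0 <= p) by (apply Prob_nonneg, meas_empty).
  destruct (Req_dec p 0) as [|Hne]; auto.
  exfalso. destruct (H (p/2)) as [N HN]; [lra|].
  pose proof (HN N (Nat.le_refl _)) as H1. pose proof (HN (S N) (Nat.le_succ_diag_r _)) as H2.
  unfold R_dist in *. simpl in H2.
  apply Rabs_def2 in H1. apply Rabs_def2 in H2. lra.
Qed.

Lemma Prob_add (A B : Omega -> Prop) : measurable P A -> measurable P B ->
  (forall w, A w -> B w -> False) ->
  Prob P (fun w => A w \/ B w) = Prob P A + Prob P B.
Proof.
  intros HA HB Hd.
  set (F := fun n : nat => match n with 0%nat => A | 1%nat => B | _ => fun _ => False end).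
  pose proof (Prob_sigma_additive _ P F) as H.
  assert (E : (fun w => exists n, F n w) = (fun w => A w \/ B w)).
  { apply ext_pred; intro w; split.
    - intros [[|[|n]] Hn]; simpl in Hn; tauto.
    - intros [h|h]; [exists 0%nat|exists 1%nat]; auto. }
  rewrite E in H.
  assert (HF : forall n, measurable P (F n)).
  { intros [|[|n]]; simpl; auto using meas_empty. }
  assert (HD : forall i j w, i <> j -> F i w -> F j w -> False).
  { intros [|[|i]] [|[|j]] w Hij; simpl; try tauto; intros; eauto. }
  specialize (H HF HD).
  apply (uniqueness_sum _ _ _ H).
  intros eps Heps. exists 1%nat. intros n Hn.
  assert (Hs : sum_f_R0 (fun n => Prob P (F n)) n = Prob P A + Prob P B).
  { induction n as [|n IH]; [lia|].
    destruct n as [|n]. simpl. reflexivity.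
    simpl sum_f_R0 in *. rewrite IH by lia. simpl. rewrite Prob_empty. ring. }
  rewrite Hs. unfold R_dist. rewrite Rminus_diag, Rabs_R0. auto.
Qed.

Lemma Prob_split (X S : Omega -> Prop) : measurable P X -> measurable P S ->
  Prob P X = Prob P (fun w => X w /\ S w) + Prob P (fun w => X w /\ ~ S w).
Proof.
  intros HX HS. rewrite <- Prob_add.
  f_equal. apply ext_pred; intro w. pose proof (classic (S w)); tauto.
  apply meas_inter; auto. apply meas_inter; auto using meas_compl.
  intros w; tauto.
Qed.

Lemma fold_plus_map {T : Type} (F G : T -> R) (l : list T) :
  fold_right Rplus 0 (map (fun p => F p + G p) l) =
  fold_right Rplus 0 (map F l) + fold_right Rplus 0 (map G l).
Proof. induction l; simpl; [ring|rewrite IHl; ring]. Qed.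

Lemma gen : forall s : list (R * (Omega -> Prop)),
  Forall (fun p => measurable P (snd p)) s ->
  forall B d, measurable P B -> (forall w, B w -> simple_eval s w <= d) ->
  fold_right Rplus 0 (map (fun p => fst p * Prob P (fun w => snd p w /\ B w)) s)
    <= d * Prob P B.
Proof.
  induction s as [|[a S] s IH]; intros Hm B d HB Hle; simpl.
  - destruct (classic (exists w, B w)) as [[w Hw]|Hn].
    + specialize (Hle w Hw). unfold simple_eval in Hle; simpl in Hle.
      pose proof (Prob_nonneg _ P B HB). nra.
    + replace B with (fun _ : Omega => False). rewrite Prob_empty; lra.
      apply ext_pred; intro w; split; [tauto|intro; apply Hn; eauto].
  - inversion Hm as [|x l HS Hs]; subst. simpl in HS.
    set (B1 := fun w => B w /\ S w). set (B2 := fun w => B w /\ ~ S w).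
    assert (HB1 : measurable P B1) by (apply meas_inter; auto).
    assert (HB2 : measurable P B2) by (apply meas_inter; auto using meas_compl).
    assert (I1 := IH Hs B1 (d - a) HB1).
    assert (I2 := IH Hs B2 d HB2).
    assert (Hev : forall w, simple_eval ((a, S) :: s) w = a * indic S w + simple_eval s w)
      by reflexivity.
    lapply I1; [clear I1; intro I1|].
    2:{ intros w [Hw HSw]. specialize (Hle w Hw). rewrite Hev in Hle.
        unfold indic in Hle. destruct excluded_middle_informative; [lra|tauto]. }
    lapply I2; [clear I2; intro I2|].
    2:{ intros w [Hw HSw]. specialize (Hle w Hw). rewrite Hev in Hle.
        unfold indic in Hle. destruct excluded_middle_informative; [tauto|lra]. }
    rewrite (map_ext_in (fun p => fst p * Prob P (fun w => snd p w /\ B w))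
        (fun p => fst p * Prob P (fun w => snd p w /\ B1 w) +
                  fst p * Prob P (fun w => snd p w /\ B2 w))).
    2:{ intros [c T] HcT. simpl. rewrite <- Rmult_plus_distr_l. f_equal.
        rewrite (Prob_split (fun w => T w /\ B w) S).
        - f_equal; f_equal; apply ext_pred; unfold B1, B2; intro; tauto.
        - rewrite Forall_forall in Hs. apply meas_inter; auto.
          apply (Hs _ HcT).
        - auto. }
    rewrite fold_plus_map.
    rewrite (Prob_split B S HB HS).
    replace (Prob P (fun w => S w /\ B w)) with (Prob P B1).
    fold B1 B2. lra.
    f_equal; apply ext_pred; unfold B1; intro; tauto.
Qed.

Lemma Expect_le (f : Omega -> R) (b : R) :
  (forall x, lower_integrals P f x -> x <= b) -> 0 <= b -> Expect P f <= b.
Proof.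
  intros Hb H0. unfold Expect.
  destruct excluded_middle_informative as [H|H]; auto.
  destruct (completeness _ _ _) as [m [Hub Hlub]]. simpl. apply Hlub. exact Hb.
Qed.

Lemma Expect_ge (f : Omega -> R) (x : R) :
  bound (lower_integrals P f) -> lower_integrals P f x -> x <= Expect P f.
Proof.
  intros Hb Hx. unfold Expect.
  destruct excluded_middle_informative as [H|H].
  - destruct (completeness _ _ _) as [m [Hub Hlub]]. simpl. apply Hub; auto.
  - exfalso; apply H; split; eauto.
Qed.

Lemma integral_full (s : list (R * (Omega -> Prop))) :
  fold_right Rplus 0 (map (fun p => fst p * Prob P (fun w => snd p w /\ True)) s)
  = simple_integral P s.
Proof.
  unfold simple_integral. f_equal. apply map_ext. intros [c T]. simpl.
  f_equal. f_equal. apply ext_pred; intro; tauto.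
Qed.

Lemma key (f : Omega -> R) (A : Omega -> Prop) (c : R) :
  0 <= c -> (forall w, f w <= c * indic A w) -> Expect P f <= c * Pr P A.
Proof.
  intros Hc Hf.
  assert (Hbd : bound (lower_integrals P (indic A))).
  { exists 1. intros x [s [Hm [Hs ->]]].
    rewrite <- integral_full.
    apply Rle_trans with (1 * Prob P (fun _ => True)); [|rewrite (Prob_full _ P); lra].
    apply gen; auto using meas_full.
    intros w _. eapply Rle_trans; [apply Hs|]. unfold indic.
    destruct excluded_middle_informative; lra. }
  assert (H0 : 0 <= Pr P A).
  { apply Expect_ge; auto. exists nil. split; [constructor|]. split; [|reflexivity].
    intro w. unfold simple_eval, indic; simpl.
    destruct excluded_middle_informative; lra. }
  apply Expect_le; [|nra].
  intros x [s [Hm [Hs ->]]].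
  destruct (Req_dec c 0) as [->|Hc0].
  - rewrite <- integral_full. rewrite Rmult_0_l.
    apply Rle_trans with (0 * Prob P (fun _ => True)); [|lra].
    apply gen; auto using meas_full. intros w _. specialize (Hs w). specialize (Hf w). lra.
  - set (s' := map (fun p => (fst p / c, snd p)) s).
    assert (Hev : forall w, simple_eval s' w = simple_eval s w / c).
    { intro w. unfold s', simple_eval. clear Hm Hs. induction s as [|[a T] s IH]; simpl.
      - unfold Rdiv; ring.
      - rewrite IH; field; auto. }
    assert (Hint : simple_integral P s' = simple_integral P s / c).
    { unfold s', simple_integral. clear Hm Hs Hev. induction s as [|[a T] s IH]; simpl.
      - unfold Rdiv; ring.
      - rewrite IH; field; auto. }
    assert (Hl : lower_integrals P (indic A) (simple_integral P s')).
    { exists s'. split; [|split; [|reflexivity]].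
      - unfold s'. rewrite Forall_forall in *. intros [a T] HI.
        apply in_map_iff in HI. destruct HI as [[b U] [E HI]]. injection E; intros; subst.
        apply (Hm _ HI).
      - intro w. rewrite Hev. specialize (Hs w). specialize (Hf w).
        unfold Rdiv. apply Rmult_le_reg_l with c; [lra|]. replace (c * (simple_eval s w * / c)) with (simple_eval s w) by (field; auto). lra. }
    pose proof (Expect_ge _ _ Hbd Hl) as HH. unfold Pr. rewrite Hint in HH.
    apply Rmult_le_compat_l with (r := c) in HH; [|lra].
    field_simplify in HH; auto.
Qed.

End S.
Lemma arith1 a Nn xa xb S U : 1 <= a -> 0 <= Nn -> xb <= xa -> 0 <= xb -> 0 <= S ->
  U = (a*xa + S)/(a+Nn) -> xb - U <= Nn*xb/a.
Proof.
  intros. assert (HU : U*(a+Nn) = a*xa + S) by (subst; field; lra).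
  set (q := Nn*xb/a). assert (Hq : q*a = Nn*xb) by (unfold q; field; lra).
  assert (0 <= q) by (unfold q; apply Rmult_le_pos; [nra|apply Rlt_le, Rinv_0_lt_compat; lra]).
  assert ((xb - U)*(a+Nn) <= q*(a+Nn)) by nra.
  apply Rmult_le_reg_r with (a+Nn); lra.
Qed.
Lemma arith2 a Nn xa xi S U : 1 <= a -> 0 <= Nn -> xi <= xa -> xa <= 1 -> S <= Nn ->
  U = (a*xi + S)/(a+Nn) -> U - xa <= Nn*(1-xa)/a.
Proof.
  intros. assert (HU : U*(a+Nn) = a*xi + S) by (subst; field; lra).
  set (q := Nn*(1-xa)/a). assert (Hq : q*a = Nn*(1-xa)) by (unfold q; field; lra).
  assert (0 <= q) by (unfold q; apply Rmult_le_pos; [nra|apply Rlt_le, Rinv_0_lt_compat; lra]).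
  assert ((U - xa)*(a+Nn) <= q*(a+Nn)) by nra.
  apply Rmult_le_reg_r with (a+Nn); lra.
Qed.

Lemma fold_max_le (l : list R) (init b : R) :
  init <= b -> (forall x, In x l -> x <= b) -> fold_right Rmax init l <= b.
Proof.
  induction l as [|x l IH]; simpl; intros H1 H2; auto.
  apply Rmax_lub; auto.
Qed.

Lemma sum_bounds {Omega : Type} (Y : nat -> Omega -> R) (w : Omega) : forall len st,
  (forall t, (st <= t < st + len)%nat -> 0 <= Y t w <= 1) ->
  0 <= fold_right Rplus 0 (map (fun t => Y t w) (seq st len)) <= INR len.
Proof.
  induction len as [|len IH]; intros st H; cbn [seq map fold_right]; [simpl; lra|].
  assert (H1 := H st ltac:(lia)).
  assert (H2 := IH (S st) ltac:(intros; apply H; lia)).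
  rewrite S_INR. lra.
Qed.

Theorem mainTheorem1
  (Omega : Type) (P : prob_space Omega)
  (k : nat) (n : nat -> nat) (xbar : nat -> R) (alpha beta N : nat)
  (Y : nat -> Omega -> R)
  (Hk : (2 <= k)%nat)
  (Hn : forall j, (j < k)%nat -> (1 <= n j)%nat)
  (Hx : forall j, (j < k)%nat -> 0 <= xbar j <= 1)
  (Halpha : (alpha < k)%nat) (Hbeta : (beta < k)%nat) (Hab : alpha <> beta)
  (Hmax : xbar beta <= xbar alpha)
  (H2nd : forall j, (j < k)%nat -> j <> alpha -> xbar j <= xbar beta)
  (HN : (1 <= N)%nat)
  (HYmeas : forall t, (t < N)%nat -> measurable_fun P (Y t))
  (HYval : forall t, (t < N)%nat -> forall w, 0 <= Y t w <= 1) :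
  blinkered_VOI P k n xbar alpha alpha N Y
    <= INR N * xbar beta / INR (n alpha) *
       Pr P (fun w => updated_mean (n alpha) N (xbar alpha) Y w <= xbar beta)
  /\
  (forall i, (i < k)%nat -> i <> alpha ->
     blinkered_VOI P k n xbar alpha i N Y
       <= INR N * (1 - xbar alpha) / INR (n i) *
          Pr P (fun w => xbar alpha <= updated_mean (n i) N (xbar i) Y w)).
Proof.
  assert (HNr : 1 <= INR N) by (apply (le_INR 1); lia).
  assert (HS : forall w, 0 <= fold_right Rplus 0 (map (fun t => Y t w) (seq 0 N)) <= INR N).
  { intro w. apply sum_bounds. intros t Ht. apply HYval. lia. }
  split.
  - unfold blinkered_VOI. apply key.
    + assert (1 <= INR (n alpha)) by (apply (le_INR 1); auto).
      pose proof (Hx beta Hbeta). apply Rmult_le_pos; [nra|].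
      apply Rlt_le, Rinv_0_lt_compat; lra.
    + intro w.
      set (U := updated_mean (n alpha) N (xbar alpha) Y w).
      assert (HA : post_mean n xbar alpha N Y alpha w = U).
      { unfold post_mean. destruct Nat.eq_dec; [reflexivity|congruence]. }
      rewrite HA.
      assert (HM : fold_right Rmax U (map (fun j => post_mean n xbar alpha N Y j w) (seq 0 k))
                   <= Rmax U (xbar beta)).
      { apply fold_max_le; [apply Rmax_l|].
        intros x Hin. apply in_map_iff in Hin. destruct Hin as [j [<- Hj]].
        apply in_seq in Hj. unfold post_mean. destruct Nat.eq_dec as [->|Hne].
        - apply Rmax_l.
        - eapply Rle_trans; [apply H2nd; auto; lia|apply Rmax_r]. }
      assert (HU : xbar beta - U <= INR N * xbar beta / INR (n alpha)).
      { apply (arith1 (INR (n alpha)) (INR N) (xbar alpha) (xbar beta)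
                 (fold_right Rplus 0 (map (fun t => Y t w) (seq 0 N)))).
        - apply (le_INR 1); auto.
        - lra.
        - auto.
        - apply (Hx beta Hbeta).
        - apply HS.
        - unfold U, updated_mean. rewrite plus_INR. reflexivity. }
      unfold indic. destruct excluded_middle_informative as [H|H]; fold U in H.
      * rewrite Rmult_1_r. match type of HM with _ <= Rmax ?a ?b => destruct (Rle_dec a b) as [h|h]; [rewrite Rmax_right in HM by exact h|apply Rnot_le_lt in h; rewrite Rmax_left in HM by lra] end; try apply Rnot_le_lt in H; lra.
      * rewrite Rmult_0_r. match type of HM with _ <= Rmax ?a ?b => destruct (Rle_dec a b) as [h|h]; [rewrite Rmax_right in HM by exact h|apply Rnot_le_lt in h; rewrite Rmax_left in HM by lra] end; try apply Rnot_le_lt in H; lra.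
  - intros i Hi Hia. unfold blinkered_VOI. apply key.
    + assert (1 <= INR (n i)) by (apply (le_INR 1); auto).
      pose proof (Hx alpha Halpha). apply Rmult_le_pos; [nra|].
      apply Rlt_le, Rinv_0_lt_compat; lra.
    + intro w.
      set (U := updated_mean (n i) N (xbar i) Y w).
      assert (HA : post_mean n xbar i N Y alpha w = xbar alpha).
      { unfold post_mean. destruct Nat.eq_dec; [congruence|reflexivity]. }
      rewrite HA.
      assert (HM : fold_right Rmax (xbar alpha) (map (fun j => post_mean n xbar i N Y j w) (seq 0 k))
                   <= Rmax (xbar alpha) U).
      { apply fold_max_le; [apply Rmax_l|].
        intros x Hin. apply in_map_iff in Hin. destruct Hin as [j [<- Hj]].
        apply in_seq in Hj. unfold post_mean. destruct Nat.eq_dec as [->|Hne].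
        - apply Rmax_r.
        - destruct (Nat.eq_dec j alpha) as [->|Hja]; [apply Rmax_l|].
          eapply Rle_trans; [apply H2nd; auto; lia|].
          eapply Rle_trans; [apply Hmax|apply Rmax_l]. }
      assert (HU : U - xbar alpha <= INR N * (1 - xbar alpha) / INR (n i)).
      { apply (arith2 (INR (n i)) (INR N) (xbar alpha) (xbar i)
                 (fold_right Rplus 0 (map (fun t => Y t w) (seq 0 N)))).
        - apply (le_INR 1); auto.
        - lra.
        - eapply Rle_trans; [apply H2nd; auto|auto].
        - apply (Hx alpha Halpha).
        - apply HS.
        - unfold U, updated_mean. rewrite plus_INR. reflexivity. }
      assert (Hq : 0 <= INR N * (1 - xbar alpha) / INR (n i)).
      { assert (1 <= INR (n i)) by (apply (le_INR 1); auto).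
        pose proof (Hx alpha Halpha). apply Rmult_le_pos; [nra|].
        apply Rlt_le, Rinv_0_lt_compat; lra. }
      unfold indic. destruct excluded_middle_informative as [H|H]; fold U in H.
      * rewrite Rmult_1_r. match type of HM with _ <= Rmax ?a ?b => destruct (Rle_dec a b) as [h|h]; [rewrite Rmax_right in HM by exact h|apply Rnot_le_lt in h; rewrite Rmax_left in HM by lra] end; try apply Rnot_le_lt in H; lra.
      * rewrite Rmult_0_r. match type of HM with _ <= Rmax ?a ?b => destruct (Rle_dec a b) as [h|h]; [rewrite Rmax_right in HM by exact h|apply Rnot_le_lt in h; rewrite Rmax_left in HM by lra] end; try apply Rnot_le_lt in H; lra.
Qed.
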